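(* Let $\tau=2\pi P/Q$ and $\beta=\nu/P+Q/2\pmod 1$ ($P,Q,\nu$ integers, $Q\ge1$, $P\ne0$), and let $d$ be the integer part of $(Q+1)/2$. If $\mu>0$ is fixed and the matrix $\mathbf S(\vartheta,\mu)$ has an eigenvalue which is constant for $\vartheta$ in a subset of positive Lebesgue measure of $(0,2\pi/Q)$, then the $d\times d$ matrix $\mathbf G^{(d)}:=\{G_{jk}\}_{1\le j,k\le d}$ is singular.
   Context: Write $P/Q=p/q$ with $p,q$ coprime. $\mathbf S(\vartheta,\mu)$ is the $Q\times Q$ matrix with entries $S_{jk}(\vartheta)=e^{-i\mu\cos(\vartheta+2\pi(j-1)/Q)}G_{jk}$, where $G_{jk}=\frac1Q\sum_{s=0}^{Q-1}e^{2\pi i s(j-k)/Q}a_{s+1}$ and $a_r=e^{-i\pi p(r+\beta-1)^2/q}$, $1\le r\le Q$. *)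

(* Defs.v *)
From HB Require Import structures.
From Stdlib Require Import Reals ZArith Lra Psatz.
From Stdlib Require Import Classical ClassicalEpsilon FunctionalExtensionality.
From mathcomp Require Import all_boot all_order all_algebra.

Set Implicit Arguments.
Unset Strict Implicit.
Unset Printing Implicit Defensive.

Local Open Scope R_scope.

Record Cpx := MkC { cre : R; cim : R }.

Definition Cpx_dec (x y : Cpx) : {x = y} + {x <> y}.
Proof.
case: x => a b; case: y => c d.
case: (Req_EM_T a c) => Hac; last by right => -[].
case: (Req_EM_T b d) => Hbd; last by right => -[].
by left; rewrite Hac Hbd.
Defined.

Definition Cpx_eqb (x y : Cpx) : bool := if Cpx_dec x y then true else false.

Lemma Cpx_eqP : Equality.axiom Cpx_eqb.
Proof. by move=> x y; rewrite /Cpx_eqb; case: Cpx_dec => H; constructor. Qed.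

HB.instance Definition _ := hasDecEq.Build Cpx Cpx_eqP.

Definition Cpx_find (P : pred Cpx) (n : nat) : option Cpx :=
  match excluded_middle_informative (exists x, P x) with
  | left H => Some (proj1_sig (constructive_indefinite_description _ H))
  | right _ => None
  end.

Lemma Cpx_find_correct P n x : Cpx_find P n = Some x -> P x.
Proof.
rewrite /Cpx_find; case: excluded_middle_informative => // H [<-].
exact: proj2_sig (constructive_indefinite_description _ H).
Qed.

Lemma Cpx_find_complete (P : pred Cpx) :
  (exists x, P x) -> exists n, Cpx_find P n.
Proof.
move=> H; exists 0%N; rewrite /Cpx_find.
by case: excluded_middle_informative.
Qed.

Lemma Cpx_find_ext (P Q : pred Cpx) : P =1 Q -> Cpx_find P =1 Cpx_find Q.
Proof.
move=> PQ; have -> : P = Q by apply: functional_extensionality.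
by [].
Qed.

HB.instance Definition _ :=
  hasChoice.Build Cpx Cpx_find_correct Cpx_find_complete Cpx_find_ext.

Definition Cadd (x y : Cpx) := MkC (cre x + cre y) (cim x + cim y).
Definition Copp (x : Cpx) := MkC (- cre x) (- cim x).
Definition Czero := MkC 0 0.
Definition Cone := MkC 1 0.
Definition Cmul (x y : Cpx) :=
  MkC (cre x * cre y - cim x * cim y) (cre x * cim y + cim x * cre y).
Definition Cinv (x : Cpx) :=
  let n := (cre x * cre x + cim x * cim x) in
  MkC (cre x / n) (- cim x / n).

Lemma CaddA : associative Cadd.
Proof. by move=> [a b] [c d] [e f]; rewrite /Cadd /Copp /Czero /=; f_equal; ring. Qed.
Lemma CaddC : commutative Cadd.
Proof. by move=> [a b] [c d]; rewrite /Cadd /Copp /Czero /=; f_equal; ring. Qed.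
Lemma Cadd0 : left_id Czero Cadd.
Proof. by move=> [a b]; rewrite /Cadd /Copp /Czero /=; f_equal; ring. Qed.
Lemma CaddN : left_inverse Czero Copp Cadd.
Proof. by move=> [a b]; rewrite /Cadd /Copp /Czero /=; f_equal; ring. Qed.

HB.instance Definition _ := GRing.isZmodule.Build Cpx CaddA CaddC Cadd0 CaddN.

Lemma CmulA : associative Cmul.
Proof. by move=> [a b] [c d] [e f]; rewrite /Cmul /Cone /=; f_equal; ring. Qed.
Lemma CmulC : commutative Cmul.
Proof. by move=> [a b] [c d]; rewrite /Cmul /Cone /=; f_equal; ring. Qed.
Lemma Cmul1 : left_id Cone Cmul.
Proof. by move=> [a b]; rewrite /Cmul /Cone /=; f_equal; ring. Qed.
Lemma CmulDl : left_distributive Cmul Cadd.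
Proof. by move=> [a b] [c d] [e f]; rewrite /Cmul /Cadd /=; f_equal; ring. Qed.
Lemma Cone_neq0 : Cone != Czero.
Proof. by apply/eqP => -[]; apply: R1_neq_R0. Qed.

HB.instance Definition _ :=
  GRing.Zmodule_isComNzRing.Build Cpx CmulA CmulC Cmul1 CmulDl Cone_neq0.

Lemma CmulV (x : Cpx) : x != 0%R -> Cmul (Cinv x) x = Cone.
Proof.
case: x => a b Hx.
have Hn : (a * a + b * b) <> 0.
  move=> H0; move/eqP: Hx; apply.
  have Ha : a = 0 by nra.
  have Hb : b = 0 by nra.
  by rewrite Ha Hb.
by rewrite /Cmul /Cinv /Cone /=; f_equal; field.
Qed.

Lemma Cinv0 : Cinv 0%R = 0%R.
Proof.
rewrite /Cinv /= /GRing.zero /=.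
rewrite /Czero /=; f_equal; rewrite /Rdiv; ring_simplify; rewrite ?Rmult_0_l //.
Qed.

HB.instance Definition _ := GRing.ComNzRing_isField.Build Cpx CmulV Cinv0.

Definition cexpi (t : R) : Cpx := MkC (cos t) (sin t).

Definition frac1 (x : R) : R := (x - IZR (Int_part x)).

Definition beta (P nu : Z) (Q : nat) : R :=
  frac1 (IZR nu / IZR P + INR Q / 2).

(* a_r = exp(-i pi p (r + beta - 1)^2 / q); here a_idx s = a_{s+1}, s = 0..Q-1 *)
Definition a_idx (p : Z) (q : nat) (b : R) (s : nat) : Cpx :=
  cexpi (- (PI * IZR p * (INR s + b) ^ 2 / INR q)).

(* G_{j+1,k+1} (0-based indices j,k) =
   (1/Q) sum_{s=0}^{Q-1} exp(2 pi i s (j-k)/Q) a_{s+1} *)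
Definition Gent (Q : nat) (p : Z) (q : nat) (b : R) (j k : nat) : Cpx :=
  ((Q%:R : Cpx)^-1 *
   \sum_(s < Q) cexpi (2 * PI * INR s * (INR j - INR k) / INR Q)
                * a_idx p q b s)%R.

Definition Gmx (Q : nat) (p : Z) (q : nat) (b : R) : 'M[Cpx]_Q :=
  \matrix_(j < Q, k < Q) Gent Q p q b j k.

Definition Gd (d Q : nat) (p : Z) (q : nat) (b : R) : 'M[Cpx]_d :=
  \matrix_(j < d, k < d) Gent Q p q b j k.

Definition Smx (Q : nat) (p : Z) (q : nat) (b : R) (theta mu : R) : 'M[Cpx]_Q :=
  \matrix_(j < Q, k < Q)
     (cexpi (- (mu * cos (theta + 2 * PI * INR j / INR Q)))
      * Gent Q p q b j k)%R.

Definition lebesgue_null (E : R -> Prop) : Prop :=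
  forall eps : R, (0 < eps) ->
    exists a b : nat -> R,
      (forall n, a n <= b n) /\
      (forall x, E x -> exists n, (a n < x < b n)) /\
      (forall N, (sum_f_R0 (fun n => b n - a n) N <= eps)).

(* E has positive (outer) Lebesgue measure. *)
Definition positive_measure (E : R -> Prop) : Prop := ~ lebesgue_null E.

(* Main.v *)
Require Import Defs.
From HB Require Import structures.
From Stdlib Require Import Reals ZArith Lra Psatz.
From Stdlib Require List Classical ClassicalEpsilon.
From mathcomp Require Import all_boot all_order all_algebra perm.
Set Implicit Arguments. Unset Strict Implicit. Unset Printing Implicit Defensive.

Module SA.
Local Open Scope R_scope.

Lemma creD (x y : Cpx) : cre (x + y)%R = cre x + cre y. Proof. by []. Qed.
Lemma cimD (x y : Cpx) : cim (x + y)%R = cim x + cim y. Proof. by []. Qed.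
Lemma creM (x y : Cpx) : cre (x * y)%R = cre x * cre y - cim x * cim y. Proof. by []. Qed.
Lemma cimM (x y : Cpx) : cim (x * y)%R = cre x * cim y + cim x * cre y. Proof. by []. Qed.
Lemma creN (x : Cpx) : cre (- x)%R = - cre x. Proof. by []. Qed.
Lemma cimN (x : Cpx) : cim (- x)%R = - cim x. Proof. by []. Qed.
Lemma creB (x y : Cpx) : cre (x - y)%R = cre x - cre y. Proof. by []. Qed.
Lemma cimB (x y : Cpx) : cim (x - y)%R = cim x - cim y. Proof. by []. Qed.
Lemma cre0 : cre 0%R = 0. Proof. by []. Qed.
Lemma cim0 : cim 0%R = 0. Proof. by []. Qed.
Lemma cre1 : cre 1%R = 1. Proof. by []. Qed.
Lemma cim1 : cim 1%R = 0. Proof. by []. Qed.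
Lemma Cext (x y : Cpx) : cre x = cre y -> cim x = cim y -> x = y.
Proof. by case: x; case: y => /= ? ? ? ? -> ->. Qed.

Definition RC (r : R) : Cpx := MkC r 0.
Definition Ci : Cpx := MkC 0 1.
Lemma creRC r : cre (RC r) = r. Proof. by []. Qed.
Lemma cimRC r : cim (RC r) = 0. Proof. by []. Qed.
Lemma creCi : cre Ci = 0. Proof. by []. Qed.
Lemma cimCi : cim Ci = 1. Proof. by []. Qed.

Definition Cexp (z : Cpx) : Cpx :=
  MkC (exp (cre z) * cos (cim z)) (exp (cre z) * sin (cim z)).
Lemma creCexp z : cre (Cexp z) = exp (cre z) * cos (cim z). Proof. by []. Qed.
Lemma cimCexp z : cim (Cexp z) = exp (cre z) * sin (cim z). Proof. by []. Qed.

Lemma Cexp_add x y : Cexp (x + y)%R = (Cexp x * Cexp y)%R.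
Proof.
apply: Cext; rewrite ?creM ?cimM !creCexp !cimCexp creD cimD exp_plus ?cos_plus ?sin_plus; ring.
Qed.
Lemma Cexp0 : Cexp 0%R = 1%R.
Proof. apply: Cext; rewrite ?creCexp ?cimCexp cre0 cim0 exp_0 ?cos_0 ?sin_0 /=; ring. Qed.
Lemma CexpNK z : (Cexp (- z) * Cexp z = 1)%R.
Proof. by rewrite -Cexp_add GRing.addNr Cexp0. Qed.
Lemma Cexp_neq0 z : Cexp z <> 0%R.
Proof. move=> H; have := CexpNK z; rewrite H GRing.mulr0 => H1.
have := f_equal cre H1; rewrite cre0 cre1; lra. Qed.

Lemma cexpi_Cexp t : cexpi t = Cexp (MkC 0 t).
Proof. apply: Cext; rewrite ?creCexp ?cimCexp /= exp_0; ring. Qed.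

Definition N1 (z : Cpx) : R := Rabs (cre z) + Rabs (cim z).
Lemma N1_ge0 z : 0 <= N1 z.
Proof. rewrite /N1; have := Rabs_pos (cre z); have := Rabs_pos (cim z); lra. Qed.
Lemma N1_add x y : N1 (x + y)%R <= N1 x + N1 y.
Proof. rewrite /N1 creD cimD; have := Rabs_triang (cre x) (cre y);
  have := Rabs_triang (cim x) (cim y); lra. Qed.
Lemma N1_opp x : N1 (- x)%R = N1 x.
Proof. by rewrite /N1 creN cimN !Rabs_Ropp. Qed.
Lemma N1_mul x y : N1 (x * y)%R <= N1 x * N1 y.
Proof.
rewrite /N1 creM cimM.
have h1 := Rabs_triang (cre x * cre y) (- (cim x * cim y)).
have h2 := Rabs_triang (cre x * cim y) (cim x * cre y).
rewrite !Rabs_Ropp !Rabs_mult in h1 h2.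
rewrite /Rminus; nra.
Qed.
Lemma Rabs_cre_N1 z : Rabs (cre z) <= N1 z.
Proof. rewrite /N1; have := Rabs_pos (cim z); lra. Qed.
Lemma Rabs_cim_N1 z : Rabs (cim z) <= N1 z.
Proof. rewrite /N1; have := Rabs_pos (cre z); lra. Qed.
Lemma N1_RC r : N1 (RC r) = Rabs r.
Proof. by rewrite /N1 /= Rabs_R0 Rplus_0_r. Qed.
Lemma N1_Ci : N1 Ci = 1.
Proof. by rewrite /N1 /= Rabs_R0 Rabs_R1 Rplus_0_l. Qed.
Lemma N1_Cexp z : N1 (Cexp z) <= 2 * exp (cre z).
Proof.
rewrite /N1 creCexp cimCexp !Rabs_mult (Rabs_pos_eq (exp _)); last exact: Rlt_le (exp_pos _).
have := exp_pos (cre z); have := COS_bound (cim z); have := SIN_bound (cim z).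
move=> hs hc he; have : Rabs (cos (cim z)) <= 1 by apply Rabs_le; lra.
have : Rabs (sin (cim z)) <= 1 by apply Rabs_le; lra. nra.
Qed.
Lemma Rabs0_eq x : Rabs x = 0 -> x = 0.
Proof. move=> H; case: (Req_dec x 0) => // /Rabs_pos_lt; lra. Qed.
Lemma N1_0 z : N1 z = 0 -> z = 0%R.
Proof. rewrite /N1 => H; have := Rabs_pos (cre z); have := Rabs_pos (cim z) => h1 h2.
apply: Cext; rewrite ?cre0 ?cim0; apply: Rabs0_eq; lra. Qed.
Lemma N1_pow x n : N1 (x ^+ n)%R <= N1 x ^ n.
Proof.
elim: n => [|n IH]; first by rewrite GRing.expr0 /N1 /= Rabs_R0 Rabs_R1; lra.
rewrite GRing.exprS /=; apply: Rle_trans (N1_mul _ _) _.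
apply: Rmult_le_compat_l; [exact: N1_ge0| exact: IH].
Qed.

Lemma dpl_ext f g x l l' : derivable_pt_lim f x l -> (forall y, f y = g y) -> l = l' ->
  derivable_pt_lim g x l'.
Proof. move=> H E <- e he; have [d Hd] := H e he; exists d => h h0 hd.
rewrite -!E; exact: Hd. Qed.

Definition Cderiv (f : R -> Cpx) (s : R) (l : Cpx) :=
  derivable_pt_lim (fun x => cre (f x)) s (cre l) /\
  derivable_pt_lim (fun x => cim (f x)) s (cim l).

Lemma Cderiv_ext f g s l l' : Cderiv f s l -> (forall y, f y = g y) -> l = l' -> Cderiv g s l'.
Proof. move=> [H1 H2] E <-; split; [apply: (dpl_ext H1)|apply: (dpl_ext H2)] => // y; by rewrite E. Qed.

Lemma Cderiv_const c s : Cderiv (fun _ => c) s 0%R.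
Proof. split; [apply: (dpl_ext (derivable_pt_lim_const (cre c) s))|
  apply: (dpl_ext (derivable_pt_lim_const (cim c) s))]; by []. Qed.

Lemma Cderiv_add f g s l1 l2 : Cderiv f s l1 -> Cderiv g s l2 ->
  Cderiv (fun x => f x + g x)%R s (l1 + l2)%R.
Proof. move=> [A1 A2] [B1 B2]; split;
 [apply: (dpl_ext (derivable_pt_lim_plus _ _ _ _ _ A1 B1))|
  apply: (dpl_ext (derivable_pt_lim_plus _ _ _ _ _ A2 B2))]; by []. Qed.

Lemma Cderiv_mul f g s l1 l2 : Cderiv f s l1 -> Cderiv g s l2 ->
  Cderiv (fun x => f x * g x)%R s (l1 * g s + f s * l2)%R.
Proof.
move=> [A1 A2] [B1 B2]; split.
- apply: dpl_ext.
  apply: derivable_pt_lim_plus (derivable_pt_lim_mult _ _ _ _ _ A1 B1)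
     (derivable_pt_lim_opp _ _ _ (derivable_pt_lim_mult _ _ _ _ _ A2 B2)).
  by move=> y; rewrite /plus_fct /opp_fct /mult_fct creM; ring.
  rewrite creD !creM; ring.
- apply: dpl_ext.
  apply: derivable_pt_lim_plus (derivable_pt_lim_mult _ _ _ _ _ A1 B2)
     (derivable_pt_lim_mult _ _ _ _ _ A2 B1).
  by move=> y; rewrite /plus_fct /mult_fct cimM; ring.
  rewrite cimD !cimM; ring.
Qed.

Lemma Cderiv_cmul c f s l : Cderiv f s l -> Cderiv (fun x => c * f x)%R s (c * l)%R.
Proof. move=> H; apply: Cderiv_ext (Cderiv_mul (Cderiv_const c s) H) _ _ => //.
by rewrite GRing.mul0r GRing.add0r. Qed.

Lemma Cderiv_affine a b s : Cderiv (fun x => a + RC x * b)%R s b.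
Proof.
split.
- apply: dpl_ext (derivable_pt_lim_plus _ _ _ _ _ (derivable_pt_lim_const (cre a) s)
     (derivable_pt_lim_scal _ (cre b) _ _ (derivable_pt_lim_id s))) _ _.
  by move=> y; rewrite /plus_fct /fct_cte /mult_real_fct /Ranalysis1.id creD creM /=; ring.
  ring.
- apply: dpl_ext (derivable_pt_lim_plus _ _ _ _ _ (derivable_pt_lim_const (cim a) s)
     (derivable_pt_lim_scal _ (cim b) _ _ (derivable_pt_lim_id s))) _ _.
  by move=> y; rewrite /plus_fct /fct_cte /mult_real_fct /Ranalysis1.id cimD cimM /=; ring.
  ring.
Qed.

Lemma Cderiv_Cexp f s l : Cderiv f s l -> Cderiv (fun x => Cexp (f x)) s (l * Cexp (f s))%R.
Proof.
move=> [A1 A2].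
have E1 := derivable_pt_lim_comp _ _ _ _ _ A1 (derivable_pt_lim_exp (cre (f s))).
have C1 := derivable_pt_lim_comp _ _ _ _ _ A2 (derivable_pt_lim_cos (cim (f s))).
have S1 := derivable_pt_lim_comp _ _ _ _ _ A2 (derivable_pt_lim_sin (cim (f s))).
split.
- apply: dpl_ext (derivable_pt_lim_mult _ _ _ _ _ E1 C1) _ _.
  by move=> y; rewrite /mult_fct /Ranalysis1.comp creCexp.
  rewrite /Ranalysis1.comp creM creCexp cimCexp; ring.
- apply: dpl_ext (derivable_pt_lim_mult _ _ _ _ _ E1 S1) _ _.
  by move=> y; rewrite /mult_fct /Ranalysis1.comp cimCexp.
  rewrite /Ranalysis1.comp cimM creCexp cimCexp; ring.
Qed.

Lemma Cderiv_sum (I : Type) (r : seq I) (F : I -> R -> Cpx) (L : I -> Cpx) s :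
  (forall i, Cderiv (F i) s (L i)) ->
  Cderiv (fun x => \sum_(i <- r) F i x)%R s (\sum_(i <- r) L i)%R.
Proof.
move=> H; elim: r => [|i r IH].
  apply: Cderiv_ext (Cderiv_const 0%R s) _ _; by move=> *; rewrite big_nil.
apply: Cderiv_ext (Cderiv_add (H i) IH) _ _; by move=> *; rewrite big_cons.
Qed.

Lemma exp_le_inc' x y : x <= y -> exp x <= exp y.
Proof. case=> [h|->]; [exact: Rlt_le (exp_increasing _ _ h)|lra]. Qed.

End SA.
Import SA.

Module SB.
Local Open Scope R_scope.

Ltac cring := apply: Cext;
  rewrite ?(creM, cimM, creD, cimD, creN, cimN, cre0, cim0, cre1, cim1, creRC, cimRC, creCi, cimCi);
  ring.

Record term := Term { tc : Cpx; tk : Z; tg : Cpx; td : Cpx }.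

Definition Lt (t : term) (w : Cpx) : Cpx :=
  (Ci * RC (IZR (tk t)) * w + tg t * Cexp (Ci * w) + td t * Cexp (- (Ci * w)))%R.
Definition tv (t : term) (w : Cpx) : Cpx := (tc t * Cexp (Lt t w))%R.
Definition eval (l : seq term) (w : Cpx) : Cpx := (\sum_(t <- l) tv t w)%R.

Definition Dt (t : term) : seq term :=
  [:: Term (Ci * RC (IZR (tk t)) * tc t)%R (tk t) (tg t) (td t);
      Term (Ci * tg t * tc t)%R (tk t + 1) (tg t) (td t);
      Term (- (Ci * td t) * tc t)%R (tk t - 1) (tg t) (td t)].
Definition Dl (l : seq term) : seq term := flatten (map Dt l).
Definition Dn (n : nat) (l : seq term) := iter n Dl l.

Lemma eval_cat l1 l2 w : eval (l1 ++ l2) w = (eval l1 w + eval l2 w)%R.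
Proof. by rewrite /eval big_cat. Qed.
Lemma eval_nil w : eval [::] w = 0%R.
Proof. by rewrite /eval big_nil. Qed.
Lemma eval_cons t l w : eval (t :: l) w = (tv t w + eval l w)%R.
Proof. by rewrite /eval big_cons. Qed.

Lemma eval_Dl l w : eval (Dl l) w = (\sum_(t <- l) eval (Dt t) w)%R.
Proof.
elim: l => [|t l IH]; first by rewrite /Dl /= eval_nil big_nil.
have -> : Dl (t :: l) = Dt t ++ Dl l by [].
by rewrite eval_cat IH big_cons.
Qed.

Lemma Dn_add m n l : Dn m (Dn n l) = Dn (m + n) l.
Proof. by rewrite /Dn iterD. Qed.

Lemma Lt_shift c t w j : Lt (Term c (tk t + j) (tg t) (td t)) w =
   (Lt t w + Ci * RC (IZR j) * w)%R.
Proof. rewrite /Lt /= plus_IZR; cring. Qed.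

Lemma tv_deriv t p v s :
  Cderiv (fun x => tv t (p + RC x * v)%R) s (v * eval (Dt t) (p + RC s * v))%R.
Proof.
set w := (p + RC s * v)%R.
have H1 : Cderiv (fun x => Ci * RC (IZR (tk t)) * (p + RC x * v))%R s (Ci * RC (IZR (tk t)) * v)%R.
  apply: Cderiv_ext (Cderiv_cmul (Ci * RC (IZR (tk t)))%R (Cderiv_affine p v s)) _ _ => //.
have H2 : Cderiv (fun x => tg t * Cexp (Ci * (p + RC x * v)))%R s
            (tg t * ((Ci * v) * Cexp (Ci * w)))%R.
  apply: Cderiv_cmul; apply: Cderiv_ext (Cderiv_Cexp (Cderiv_affine (Ci * p)%R (Ci * v)%R s)) _ _.
  by move=> y; congr Cexp; cring.
  by congr (_ * Cexp _)%R; rewrite /w; cring.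
have H3 : Cderiv (fun x => td t * Cexp (- (Ci * (p + RC x * v))))%R s
            (td t * (- (Ci * v) * Cexp (- (Ci * w))))%R.
  apply: Cderiv_cmul; apply: Cderiv_ext (Cderiv_Cexp (Cderiv_affine (- (Ci * p))%R (- (Ci * v))%R s)) _ _.
  by move=> y; congr Cexp; cring.
  by congr (_ * Cexp _)%R; rewrite /w; cring.
have H := Cderiv_cmul (tc t) (Cderiv_Cexp (Cderiv_add (Cderiv_add H1 H2) H3)).
apply: Cderiv_ext H _ _ => //.
rewrite /eval !big_cons big_nil /tv.
have e1 : Lt (Term (Ci * tg t * tc t)%R (tk t + 1) (tg t) (td t)) w = (Lt t w + Ci * w)%R.
  by rewrite (Lt_shift _ t w 1); cring.
have e2 : Lt (Term (- (Ci * td t) * tc t)%R (tk t - 1) (tg t) (td t)) w = (Lt t w + - (Ci * w))%R.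
  rewrite /Lt /= minus_IZR. cring.
rewrite e1 e2 !(Cexp_add (Lt t w)).
have EL : forall y, Cexp (Ci * RC (IZR (tk t)) * y + tg t * Cexp (Ci * y) + td t * Cexp (- (Ci * y)))%R = Cexp (Lt t y) by [].
rewrite EL.
move: (Cexp (Lt t w)) (Cexp (Ci * w)%R) (Cexp (- (Ci * w))%R) => A B C /=.
cring.
Qed.

Lemma eval_deriv l p v s :
  Cderiv (fun x => eval l (p + RC x * v)%R) s (v * eval (Dl l) (p + RC s * v))%R.
Proof.
apply: Cderiv_ext (@Cderiv_sum term l (fun t x => tv t (p + RC x * v)%R)
   (fun t => v * eval (Dt t) (p + RC s * v))%R s (fun t => tv_deriv t p v s)) _ _ => //.
by rewrite eval_Dl GRing.mulr_sumr.
Qed.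

Definition tmul (t1 t2 : term) : term :=
  Term (tc t1 * tc t2)%R (tk t1 + tk t2) (tg t1 + tg t2)%R (td t1 + td t2)%R.
Lemma tv_mul t1 t2 w : tv (tmul t1 t2) w = (tv t1 w * tv t2 w)%R.
Proof.
rewrite /tv.
have -> : Lt (tmul t1 t2) w = (Lt t1 w + Lt t2 w)%R by rewrite /Lt /= plus_IZR; cring.
rewrite Cexp_add; move: (Cexp _) (Cexp _) => A B; cring.
Qed.
Definition lmul (l1 l2 : seq term) := flatten (map (fun t1 => map (tmul t1) l2) l1).
Lemma eval_lmul l1 l2 w : eval (lmul l1 l2) w = (eval l1 w * eval l2 w)%R.
Proof.
elim: l1 => [|t l IH]; first by rewrite /lmul /= !eval_nil GRing.mul0r.
have -> : lmul (t :: l) l2 = map (tmul t) l2 ++ lmul l l2 by [].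
rewrite eval_cat IH eval_cons GRing.mulrDl; congr (_ + _)%R.
rewrite /eval big_map GRing.mulr_sumr; apply: eq_bigr => t2 _; exact: tv_mul.
Qed.

Definition tconst (c : Cpx) := Term c 0 0%R 0%R.
Lemma tv_const c w : tv (tconst c) w = c.
Proof.
rewrite /tv /Lt /=.
have -> : (Ci * RC 0 * w + 0 * Cexp (Ci * w) + 0 * Cexp (- (Ci * w)))%R = 0%R by cring.
by rewrite Cexp0 GRing.mulr1.
Qed.

Definition good (f : Cpx -> Cpx) := exists l, forall w, f w = eval l w.
Lemma good_const c : good (fun _ => c).
Proof. exists [:: tconst c] => w; by rewrite eval_cons eval_nil tv_const GRing.addr0. Qed.
Lemma good_add f g : good f -> good g -> good (fun w => f w + g w)%R.
Proof. move=> [l1 H1] [l2 H2]; exists (l1 ++ l2) => w; by rewrite eval_cat H1 H2. Qed.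
Lemma good_mul f g : good f -> good g -> good (fun w => f w * g w)%R.
Proof. move=> [l1 H1] [l2 H2]; exists (lmul l1 l2) => w; by rewrite eval_lmul H1 H2. Qed.
Lemma good_sum (I : Type) (r : seq I) (F : I -> Cpx -> Cpx) :
  (forall i, good (F i)) -> good (fun w => \sum_(i <- r) F i w)%R.
Proof.
move=> H; elim: r => [|i r IH].
  by have [l Hl] := good_const 0%R; exists l => w; rewrite big_nil; apply: Hl.
have [l Hl] := good_add (H i) IH; exists l => w; by rewrite big_cons Hl.
Qed.
Lemma good_prod (I : Type) (r : seq I) (F : I -> Cpx -> Cpx) :
  (forall i, good (F i)) -> good (fun w => \prod_(i <- r) F i w)%R.
Proof.
move=> H; elim: r => [|i r IH].
  by have [l Hl] := good_const 1%R; exists l => w; rewrite big_nil; apply: Hl.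
have [l Hl] := good_mul (H i) IH; exists l => w; by rewrite big_cons Hl.
Qed.
Lemma good_exp (g d : Cpx) : good (fun w => Cexp (g * Cexp (Ci * w) + d * Cexp (- (Ci * w))))%R.
Proof.
exists [:: Term 1%R 0 g d] => w; rewrite eval_cons eval_nil GRing.addr0 /tv /Lt /= GRing.mul1r.
congr Cexp; cring.
Qed.

End SB.
Import SB.

Module SC.
Local Open Scope R_scope.

Fixpoint bnd (K A : R) (l : seq term) : Prop :=
  match l with
  | [::] => True
  | t :: l => Rabs (IZR (tk t)) <= K /\ N1 (tg t) + N1 (td t) <= A /\ bnd K A l
  end.

Fixpoint W (Y : R) (l : seq term) : R :=
  match l with
  | [::] => 0
  | t :: l => N1 (tc t) * exp (Rabs (IZR (tk t)) * Y) + W Y l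
  end.

Lemma W_ge0 Y l : 0 <= W Y l.
Proof. elim: l => [|t l IH] /=; first lra.
have := N1_ge0 (tc t); have := exp_pos (Rabs (IZR (tk t)) * Y); nra. Qed.

Lemma W_cat Y l1 l2 : W Y (l1 ++ l2) = W Y l1 + W Y l2.
Proof. elim: l1 => [|t l IH] /=; [lra| rewrite IH; lra]. Qed.

Lemma bnd_cat K A l1 l2 : bnd K A l1 -> bnd K A l2 -> bnd K A (l1 ++ l2).
Proof. elim: l1 => [|t l IH] //= [h1 [h2 h3]] h; split; [done|split; [done|exact: IH]]. Qed.

Lemma bnd_mono K A K' A' l : K <= K' -> A <= A' -> bnd K A l -> bnd K' A' l.
Proof. move=> hK hA; elim: l => [|t l IH] //= [h1 [h2 h3]]; split; [lra|split; [lra|exact: IH]]. Qed.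

Lemma bnd_exists l : exists K A, 0 <= K /\ 0 <= A /\ bnd K A l.
Proof.
elim: l => [|t l [K [A [hK [hA IH]]]]]; first by exists 0, 0; split; [lra|split; [lra|done]].
exists (Rabs (IZR (tk t)) + K), (N1 (tg t) + N1 (td t) + A).
have := Rabs_pos (IZR (tk t)); have := N1_ge0 (tg t); have := N1_ge0 (td t) => *.
split; [lra|split; [lra|]]; split; [lra|split; [lra|]].
apply: bnd_mono IH; lra.
Qed.

Lemma re_le_N1 z : cre z <= N1 z.
Proof. have := Rabs_cre_N1 z; have := Rle_abs (cre z); lra. Qed.

Lemma tv_bound K A Y t w : 0 <= Y -> Rabs (cim w) <= Y ->
  Rabs (IZR (tk t)) <= K -> N1 (tg t) + N1 (td t) <= A ->
  N1 (tv t w) <= N1 (tc t) * exp (Rabs (IZR (tk t)) * Y) * (2 * exp (2 * A * exp Y)).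
Proof.
move=> hY hw hK hA.
rewrite /tv; apply: Rle_trans (N1_mul _ _) _.
have hc := N1_ge0 (tc t).
suff : 2 * exp (cre (Lt t w)) <= exp (Rabs (IZR (tk t)) * Y) * (2 * exp (2 * A * exp Y)).
  move=> h; have := N1_Cexp (Lt t w); nra.
rewrite -Rmult_assoc (Rmult_comm _ 2) Rmult_assoc -exp_plus.
apply: Rmult_le_compat_l; first lra.
apply: exp_le_inc'.
have e1 : cre (Ci * RC (IZR (tk t)) * w)%R = - (IZR (tk t)) * cim w by rewrite !creM /=; ring.
have b1 : cre (Ci * RC (IZR (tk t)) * w)%R <= Rabs (IZR (tk t)) * Y.
  rewrite e1; have := Rle_abs (- IZR (tk t) * cim w); rewrite Rabs_mult Rabs_Ropp.
  have := Rabs_pos (IZR (tk t)); nra.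
have b2 : cre (tg t * Cexp (Ci * w))%R <= N1 (tg t) * (2 * exp Y).
  apply: Rle_trans (re_le_N1 _) _; apply: Rle_trans (N1_mul _ _) _.
  apply: Rmult_le_compat_l; first exact: N1_ge0.
  apply: Rle_trans (N1_Cexp _) _; apply: Rmult_le_compat_l; first lra.
  apply: exp_le_inc'; rewrite creM /=; have := Rle_abs (- cim w); rewrite Rabs_Ropp; lra.
have b3 : cre (td t * Cexp (- (Ci * w)))%R <= N1 (td t) * (2 * exp Y).
  apply: Rle_trans (re_le_N1 _) _; apply: Rle_trans (N1_mul _ _) _.
  apply: Rmult_le_compat_l; first exact: N1_ge0.
  apply: Rle_trans (N1_Cexp _) _; apply: Rmult_le_compat_l; first lra.
  apply: exp_le_inc'; rewrite creN creM /=; have := Rle_abs (cim w); lra.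
have : cre (Lt t w) = cre (Ci * RC (IZR (tk t)) * w)%R + cre (tg t * Cexp (Ci * w))%R
         + cre (td t * Cexp (- (Ci * w)))%R by [].
move=> ->; have := exp_pos Y; nra.
Qed.

Lemma eval_bound K A Y l w : 0 <= Y -> Rabs (cim w) <= Y -> bnd K A l ->
  N1 (eval l w) <= W Y l * (2 * exp (2 * A * exp Y)).
Proof.
move=> hY hw; elim: l => [|t l IH] /=.
  by rewrite eval_nil /N1 /= Rabs_R0; lra.
move=> [h1 [h2 h3]]; rewrite eval_cons; apply: Rle_trans (N1_add _ _) _.
have := tv_bound hY hw h1 h2; have := IH h3; lra.
Qed.

Lemma W_Dt K A Y t : 0 <= Y -> Rabs (IZR (tk t)) <= K -> N1 (tg t) + N1 (td t) <= A ->
  W Y (Dt t) <= (K + A * exp Y) * (N1 (tc t) * exp (Rabs (IZR (tk t)) * Y)).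
Proof.
move=> hY hK hA; rewrite /Dt /= ?plus_IZR ?minus_IZR /=. 
set k := IZR (tk t) in hK *.
have n1 : N1 (Ci * RC k * tc t)%R <= Rabs k * N1 (tc t).
  apply: Rle_trans (N1_mul _ _) _; apply: Rmult_le_compat_r; first exact: N1_ge0.
  apply: Rle_trans (N1_mul _ _) _; rewrite N1_Ci N1_RC; lra.
have n2 : N1 (Ci * tg t * tc t)%R <= N1 (tg t) * N1 (tc t).
  apply: Rle_trans (N1_mul _ _) _; apply: Rmult_le_compat_r; first exact: N1_ge0.
  apply: Rle_trans (N1_mul _ _) _; rewrite N1_Ci; lra.
have n3 : N1 (- (Ci * td t) * tc t)%R <= N1 (td t) * N1 (tc t).
  apply: Rle_trans (N1_mul _ _) _; apply: Rmult_le_compat_r; first exact: N1_ge0.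
  rewrite N1_opp; apply: Rle_trans (N1_mul _ _) _; rewrite N1_Ci; lra.
have e2 : exp (Rabs (k + 1) * Y) <= exp (Rabs k * Y) * exp Y.
  rewrite -exp_plus; apply: exp_le_inc'; have := Rabs_triang k 1; rewrite Rabs_R1; nra.
have e3 : exp (Rabs (k + -1) * Y) <= exp (Rabs k * Y) * exp Y.
  rewrite -exp_plus; apply: exp_le_inc'; have := Rabs_triang k (-1).
  have -> : Rabs (-1) = 1 by rewrite Rabs_left; lra.
  nra.
have p1 := exp_pos (Rabs k * Y); have p2 := exp_pos Y.
have q1 := N1_ge0 (tc t); have q2 := N1_ge0 (tg t); have q3 := N1_ge0 (td t).
have q4 := N1_ge0 (Ci * tg t * tc t)%R; have q5 := N1_ge0 (- (Ci * td t) * tc t)%R.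
have r1 : N1 (Ci * RC k * tc t)%R * exp (Rabs k * Y) <= Rabs k * N1 (tc t) * exp (Rabs k * Y) by nra.
have r2 : N1 (Ci * tg t * tc t)%R * exp (Rabs (k + 1) * Y) <= N1 (tg t) * N1 (tc t) * (exp (Rabs k * Y) * exp Y).
  apply: Rle_trans (Rmult_le_compat_l _ _ _ q4 e2) _; apply: Rmult_le_compat_r; [nra|exact: n2].
have r3 : N1 (- (Ci * td t) * tc t)%R * exp (Rabs (k + -1) * Y) <= N1 (td t) * N1 (tc t) * (exp (Rabs k * Y) * exp Y).
  apply: Rle_trans (Rmult_le_compat_l _ _ _ q5 e3) _; apply: Rmult_le_compat_r; [nra|exact: n3].
have : N1 (tg t) * N1 (tc t) * (exp (Rabs k * Y) * exp Y) + N1 (td t) * N1 (tc t) * (exp (Rabs k * Y) * exp Y)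
   <= A * exp Y * (N1 (tc t) * exp (Rabs k * Y)).
  have hX : 0 <= N1 (tc t) * exp (Rabs k * Y) * exp Y.
    apply: Rmult_le_pos; [apply: Rmult_le_pos; lra|lra].
  have := Rmult_le_compat_r _ _ _ hX hA; lra.
have : Rabs k * N1 (tc t) * exp (Rabs k * Y) <= K * (N1 (tc t) * exp (Rabs k * Y)).
  have hX : 0 <= N1 (tc t) * exp (Rabs k * Y) by apply: Rmult_le_pos; lra.
  have := Rmult_le_compat_r _ _ _ hX hK; lra.
lra.
Qed.

Lemma W_Dl K A Y l : 0 <= Y -> 0 <= K -> 0 <= A -> bnd K A l -> W Y (Dl l) <= (K + A * exp Y) * W Y l.
Proof.
move=> hY hK hA; elim: l => [|t l IH]; first by rewrite /Dl /=; lra.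
move=> [h1 [h2 h3]].
have -> : Dl (t :: l) = Dt t ++ Dl l by [].
rewrite W_cat [W Y (t :: l)]/= Rmult_plus_distr_l; have := W_Dt hY h1 h2; have := IH h3; lra.
Qed.

Lemma bnd_Dl K A l : bnd K A l -> bnd (K + 1) A (Dl l).
Proof.
elim: l => [|t l IH] // [h1 [h2 h3]].
have -> : Dl (t :: l) = Dt t ++ Dl l by [].
apply: bnd_cat (IH h3); rewrite /Dt /= ?plus_IZR ?minus_IZR.
split; [lra|split; [done|]]; split; [have := Rabs_triang (IZR (tk t)) 1; rewrite Rabs_R1; lra|split; [done|]].
split; [|done]; have := Rabs_triang (IZR (tk t)) (-1).
have -> : Rabs (-1) = 1 by rewrite Rabs_left; lra.
rewrite ?opp_IZR; lra.
Qed.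

Fixpoint prodK (c : R) (n : nat) : R :=
  match n with O => 1 | S n => prodK c n * (c + INR n) end.

Lemma prodK_ge0 c n : 0 <= c -> 0 <= prodK c n.
Proof. move=> hc; elim: n => [|n IH] /=; [lra|]; have := pos_INR n; nra. Qed.

Lemma W_Dn K A Y l n : 0 <= Y -> 0 <= K -> 0 <= A -> bnd K A l ->
  W Y (Dn n l) <= prodK (K + A * exp Y) n * W Y l /\ bnd (K + INR n) A (Dn n l).
Proof.
move=> hY hK hA hb; elim: n => [|n [IH1 IH2]].
  split; [rewrite /Dn /=; lra|]; apply: bnd_mono hb; rewrite /=; lra.
have -> : Dn n.+1 l = Dl (Dn n l) by [].
have hKn : 0 <= K + INR n by have := pos_INR n; lra.
split.
- apply: Rle_trans (W_Dl hY hKn hA IH2) _; rewrite [prodK _ _.+1]/=.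
  have := pos_INR n; have := exp_pos Y; have := W_ge0 Y (Dn n l).
  move=> h1 h2 h3.
  have hc : 0 <= K + A * exp Y + INR n by nra.
  have := Rmult_le_compat_l _ _ _ hc IH1; nra.
- apply: (bnd_mono _ _ (bnd_Dl IH2)); rewrite ?S_INR; lra.
Qed.

End SC.
Import SC.

Module SD.
Local Open Scope R_scope.

Definition Fj (j : nat) (x : R) := x ^ j / INR (fact j).

Lemma dFj j x : derivable_pt_lim (Fj j.+1) x (Fj j x).
Proof.
apply: dpl_ext (derivable_pt_lim_scal _ (/ INR (fact j.+1)) _ _ (derivable_pt_lim_pow x j.+1)) _ _.
  by move=> y; rewrite /mult_real_fct /Fj /Rdiv Rmult_comm.
rewrite /Fj fact_simpl mult_INR; change (Nat.pred j.+1) with j.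
have := INR_fact_lt_0 j; have : 0 < INR j.+1 by apply: lt_0_INR; apply/ltP.
move=> h1 h2; field; lra.
Qed.

Lemma Fj_ge0 j x : 0 <= x -> 0 <= Fj j x.
Proof. move=> hx; rewrite /Fj; apply: Rmult_le_pos; first exact: pow_le.
exact: Rlt_le (Rinv_0_lt_compat _ (INR_fact_lt_0 j)). Qed.

Lemma Fj0 j : Fj j.+1 0 = 0.
Proof. by rewrite /Fj /= Rmult_0_l /Rdiv Rmult_0_l. Qed.

Lemma one_step (g g' : R -> R) M j :
  (forall s, 0 <= s <= 1 -> derivable_pt_lim g s (g' s)) -> g 0 = 0 ->
  (forall s, 0 <= s <= 1 -> Rabs (g' s) <= M * Fj j s) ->
  forall s, 0 <= s <= 1 -> Rabs (g s) <= M * Fj j.+1 s.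
Proof.
move=> hd h0 hb s hs.
case: (Req_dec s 0) => [->|hs0]; first by rewrite h0 Fj0 Rabs_R0; lra.
have hsp : 0 < s by lra.
have d1 : forall c, 0 <= c <= s -> derivable_pt_lim (fun x => M * Fj j.+1 x - g x) c (M * Fj j c - g' c).
  move=> c hc; apply: dpl_ext (derivable_pt_lim_minus _ _ _ _ _
     (derivable_pt_lim_scal _ M _ _ (dFj j c)) (hd c (conj (proj1 hc) (Rle_trans _ _ _ (proj2 hc) (proj2 hs))))) _ _ => //.
have d2 : forall c, 0 <= c <= s -> derivable_pt_lim (fun x => M * Fj j.+1 x + g x) c (M * Fj j c + g' c).
  move=> c hc; apply: dpl_ext (derivable_pt_lim_plus _ _ _ _ _
     (derivable_pt_lim_scal _ M _ _ (dFj j c)) (hd c (conj (proj1 hc) (Rle_trans _ _ _ (proj2 hc) (proj2 hs))))) _ _ => //.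
have [c1 [e1 hc1]] := MVT_cor2 _ _ _ _ hsp d1.
have [c2 [e2 hc2]] := MVT_cor2 _ _ _ _ hsp d2.
have b1 := hb c1 (conj (Rlt_le _ _ (proj1 hc1)) (Rle_trans _ _ _ (Rlt_le _ _ (proj2 hc1)) (proj2 hs))).
have b2 := hb c2 (conj (Rlt_le _ _ (proj1 hc2)) (Rle_trans _ _ _ (Rlt_le _ _ (proj2 hc2)) (proj2 hs))).
have a1 := Rle_abs (g' c1); have a2 := Rle_abs (- g' c2); rewrite Rabs_Ropp in a2.
move: e1 e2; rewrite Fj0 h0 => e1 e2.
have p1 : 0 <= (M * Fj j c1 - g' c1) * (s - 0) by apply: Rmult_le_pos; lra.
have p2 : 0 <= (M * Fj j c2 + g' c2) * (s - 0) by apply: Rmult_le_pos; lra.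
apply: Rabs_le; lra.
Qed.

Lemma taylor_bound (h : nat -> R -> R) n M :
  (forall k s, 0 <= s <= 1 -> derivable_pt_lim (h k) s (h k.+1 s)) ->
  (forall k, (k < n)%N -> h k 0 = 0) ->
  (forall s, 0 <= s <= 1 -> Rabs (h n s) <= M) ->
  Rabs (h 0%N 1) <= M / INR (fact n).
Proof.
move=> hd h0 hb.
suff H : forall j, (j <= n)%N -> forall s, 0 <= s <= 1 -> Rabs (h (n - j)%N s) <= M * Fj j s.
  have := H n (leqnn n) 1; rewrite subnn /Fj pow1 /Rdiv Rmult_1_l; apply; lra.
elim=> [|j IH] hj s hs.
  by rewrite subn0 /Fj /= /Rdiv Rmult_1_l Rinv_1 !Rmult_1_r; apply: hb.
apply: (one_step (g' := h (n - j)%N)) => //.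
- move=> x hx; have := hd (n - j.+1)%N x hx; by rewrite subnSK.
- by apply: h0; rewrite ltn_subrL; apply/andP; split => //; apply: leq_trans hj.
- by move=> x hx; apply: IH => //; apply: ltnW.
Qed.

Definition bsq (c : R) (n : nat) := (/ 2) ^ n * prodK c n / INR (fact n).

Lemma bsq_ge0 c n : 0 <= c -> 0 <= bsq c n.
Proof. move=> hc; rewrite /bsq; apply: Rmult_le_pos; [apply: Rmult_le_pos; [apply: pow_le; lra|exact: prodK_ge0]|].
exact: Rlt_le (Rinv_0_lt_compat _ (INR_fact_lt_0 n)). Qed.

Lemma bsqS c n : bsq c n.+1 = bsq c n * (/ 2 * (c + INR n) / INR n.+1).
Proof.
rewrite /bsq fact_simpl mult_INR; rewrite [(/ 2) ^ n.+1]/= [prodK c n.+1]/=.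
have := INR_fact_lt_0 n; have : 0 < INR n.+1 by apply: lt_0_INR; apply/ltP.
move=> h1 h2; field; lra.
Qed.

Lemma bsq_small c eps : 0 <= c -> 0 < eps -> exists n, bsq c n < eps.
Proof.
move=> hc he.
have [N HN] := INR_unbounded (2 * c).
have step : forall m, bsq c (m + N)%N <= (3/4) ^ m * bsq c N.
  elim=> [|m IH]; first by rewrite add0n /=; lra.
  rewrite addSn bsqS.
  have hn : 0 < INR (m + N).+1 by apply: lt_0_INR; apply/ltP.
  have : / 2 * (c + INR (m + N)) / INR (m + N).+1 <= 3/4.
    apply: (Rmult_le_reg_r (INR (m + N).+1)) => //.
    rewrite /Rdiv Rmult_assoc Rinv_l; last lra.
    rewrite S_INR plus_INR; have := pos_INR m; lra.
  move=> hr; have hb := bsq_ge0 (m + N)%N hc.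
  apply: Rle_trans (Rmult_le_compat_l _ _ _ hb hr) _; rewrite [(3/4)^m.+1]/=; nra.
have [m Hm] := pow_lt_1_zero (3/4) ltac:(rewrite Rabs_right; lra) (eps / (bsq c N + 1))
  ltac:(apply: Rdiv_lt_0_compat => //; have := bsq_ge0 N hc; lra).
exists (m + N)%N.
have := Hm m (le_n m); rewrite Rabs_right; last by apply: Rle_ge; apply: pow_le; lra.
move=> h; have hb := bsq_ge0 N hc.
have : (3/4) ^ m * (bsq c N + 1) < eps.
  by move: h; rewrite /Rdiv => h; apply: (Rmult_lt_reg_r (/ (bsq c N + 1))); [apply: Rinv_0_lt_compat; lra|rewrite Rmult_assoc Rinv_r; lra].
have := step m; have := pow_le (3/4) m; nra.
Qed.

End SD.
Import SD.

Module SE.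
Local Open Scope R_scope.

Definition prj (b : bool) : Cpx -> R := if b then cre else cim.

Lemma prj_N1 b z : Rabs (prj b z) <= N1 z.
Proof. case: b; [exact: Rabs_cre_N1|exact: Rabs_cim_N1]. Qed.

Lemma prj_deriv b f s l : Cderiv f s l -> derivable_pt_lim (fun x => prj b (f x)) s (prj b l).
Proof. by case: b => -[]. Qed.

Lemma prj0 b : prj b 0%R = 0. Proof. by case: b. Qed.

Lemma Cext_prj x : (forall b, prj b x = 0) -> x = 0%R.
Proof. move=> H; apply: Cext; [exact: (H true)|exact: (H false)]. Qed.

Lemma small_zero x c C : 0 <= c -> 0 <= C -> (forall n, Rabs x <= bsq c n * C) -> x = 0.
Proof.
move=> hc hC H; apply: Rabs0_eq; apply: Rle_antisym; last exact: Rabs_pos.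
apply: Rnot_lt_le => hx.
have [n Hn] := @bsq_small c (Rabs x / (C + 1)) hc
   ltac:(apply: Rdiv_lt_0_compat; lra).
have := H n; have := bsq_ge0 n hc => h1 h2.
have : bsq c n * (C + 1) < Rabs x.
  by move: Hn; rewrite /Rdiv => Hn; apply: (Rmult_lt_reg_r (/ (C + 1))); [apply: Rinv_0_lt_compat; lra|rewrite Rmult_assoc Rinv_r; lra].
nra.
Qed.

Lemma path0 p v : (p + RC 0 * v)%R = p.
Proof. apply: Cext; rewrite ?creD ?cimD ?creM ?cimM ?creRC ?cimRC; field; lra. Qed.
Lemma path1 p v : (p + RC 1 * v)%R = (p + v)%R.
Proof. apply: Cext; rewrite ?creD ?cimD ?creM ?cimM ?creRC ?cimRC; field; lra. Qed.

Lemma prop_step l p v : N1 v <= / 2 -> (forall n, eval (Dn n l) p = 0%R) -> eval l (p + v)%R = 0%R.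
Proof.
move=> hv H.
have [K [A [hK [hA hb]]]] := bnd_exists l.
set Y := Rabs (cim p) + Rabs (cim v).
have hY : 0 <= Y by rewrite /Y; have := Rabs_pos (cim p); have := Rabs_pos (cim v); lra.
set c := K + A * exp Y.
have hc : 0 <= c by rewrite /c; have := exp_pos Y; nra.
set B := 2 * exp (2 * A * exp Y).
have hB : 0 <= B by rewrite /B; have := exp_pos (2 * A * exp Y); lra.
have hpath : forall s, 0 <= s <= 1 -> Rabs (cim (p + RC s * v)%R) <= Y.
  move=> s hs; rewrite cimD cimM /= Rmult_0_l Rplus_0_r.
  apply: Rle_trans (Rabs_triang _ _) _; rewrite Rabs_mult (Rabs_pos_eq s); last lra.
  rewrite /Y; have := Rabs_pos (cim v); nra.
apply: Cext_prj => b.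
pose h k s := prj b ((v ^+ k) * eval (Dn k l) (p + RC s * v))%R.
have hd : forall k s, 0 <= s <= 1 -> derivable_pt_lim (h k) s (h k.+1 s).
  move=> k s _; rewrite /h; apply: prj_deriv.
  apply: Cderiv_ext (Cderiv_cmul (v ^+ k)%R (eval_deriv (Dn k l) p v s)) _ _ => //.
  by rewrite GRing.mulrA -GRing.exprSr.
have Hb : forall n, Rabs (h 0%N 1) <= bsq c n * (W Y l * B).
  move=> n.
  have := @taylor_bound h n ((/ 2) ^ n * (prodK c n * W Y l * B)) hd
    (fun k _ => ltac:(rewrite /h path0 H GRing.mulr0; exact: prj0)).
  have -> : ((/ 2) ^ n * (prodK c n * W Y l * B) / INR (fact n)) = bsq c n * (W Y l * B)
    by rewrite /bsq /Rdiv; ring.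
  apply => s hs; rewrite /h.
  apply: Rle_trans (prj_N1 _ _) _; apply: Rle_trans (N1_mul _ _) _.
  have [hW hbn] := W_Dn n hY hK hA hb.
  have e1 := eval_bound hY (hpath s hs) hbn.
  have e2 : N1 (v ^+ n)%R <= (/ 2) ^ n.
    apply: Rle_trans (N1_pow _ _) _; apply: pow_incr; split; [exact: N1_ge0|exact: hv].
  have q1 := N1_ge0 (v ^+ n)%R; have q2 := N1_ge0 (eval (Dn n l) (p + RC s * v)%R).
  have q3 : 0 <= (/ 2) ^ n by apply: pow_le; lra.
  have q4 := W_ge0 Y (Dn n l).
  have : N1 (eval (Dn n l) (p + RC s * v)%R) <= prodK c n * W Y l * B.
    apply: Rle_trans e1 _; rewrite -/B; apply: Rmult_le_compat_r => //.
  move=> e3.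
  apply: Rle_trans (Rmult_le_compat_r _ _ _ q2 e2) _.
  apply: Rmult_le_compat_l => //.
have := small_zero hc (Rmult_le_pos _ _ (W_ge0 Y l) hB) Hb.
by rewrite /h /= GRing.expr0 GRing.mul1r path1.
Qed.

Lemma prop_step_all l p v : N1 v <= / 2 -> (forall n, eval (Dn n l) p = 0%R) ->
  forall m, eval (Dn m l) (p + v)%R = 0%R.
Proof.
move=> hv H m; apply: prop_step hv _ => n; by rewrite Dn_add; apply: H.
Qed.

Lemma N1_scale r z : N1 (RC r * z)%R = Rabs r * N1 z.
Proof. rewrite /N1 creM cimM /= !Rmult_0_l Rminus_0_r Rplus_0_r !Rabs_mult; ring. Qed.

Lemma identity l p : (forall n, eval (Dn n l) p = 0%R) -> forall w, eval l w = 0%R.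
Proof.
move=> H.
have key : forall N : nat, forall w, N1 (w - p)%R <= INR N / 2 -> forall m, eval (Dn m l) w = 0%R.
  elim=> [|N IH] w hw.
    have : w = p.
      have := N1_ge0 (w - p)%R => h0; change (INR 0) with 0 in hw.
      have := @N1_0 (w - p)%R ltac:(lra) => /eqP; rewrite GRing.subr_eq0 => /eqP //.
    by move=> ->.
  have hN : 0 < INR N.+1 by apply: lt_0_INR; apply/ltP.
  set w' := (p + RC (INR N / INR N.+1) * (w - p))%R.
  have -> : w = (w' + (w - w'))%R by rewrite GRing.addrC GRing.subrK.
  apply: prop_step_all.
  - have -> : (w - w')%R = (RC (/ INR N.+1) * (w - p))%R.
      rewrite /w'; apply: Cext; rewrite ?(creD, cimD, creN, cimN, creM, cimM, creRC, cimRC); rewrite S_INR; field; apply: Rgt_not_eq; have := pos_INR N; lra.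
    rewrite N1_scale Rabs_pos_eq; last by apply: Rlt_le; apply: Rinv_0_lt_compat.
    move: hw; rewrite S_INR in hN * => hw.
    apply: (Rmult_le_reg_l (INR N + 1)) => //; rewrite -Rmult_assoc Rinv_r; lra.
  - apply: IH.
    have -> : (w' - p)%R = (RC (INR N / INR N.+1) * (w - p))%R.
      rewrite /w'; apply: Cext; rewrite ?(creD, cimD, creN, cimN, creM, cimM, creRC, cimRC); field; lra.
    rewrite N1_scale Rabs_pos_eq; last by apply: Rmult_le_pos; [exact: pos_INR|apply: Rlt_le; apply: Rinv_0_lt_compat].
    move: hw; rewrite S_INR in hN * => hw.
    have hN0 := pos_INR N.
    have e : INR N / (INR N + 1) * N1 (w - p)%R <= INR N / (INR N + 1) * ((INR N + 1) / 2).
      apply: Rmult_le_compat_l => //; apply: Rmult_le_pos => //; apply: Rlt_le; apply: Rinv_0_lt_compat; lra.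
    apply: Rle_trans e _; right; field; lra.
move=> w; have [N HN] := INR_unbounded (2 * N1 (w - p)%R).
have hk : N1 (w - p)%R <= INR N / 2 by lra.
exact: (key N w hk 0%N).
Qed.

End SE.
Import SE.

Module SF.
Import Classical ClassicalEpsilon.
Local Open Scope R_scope.

Definition accum (P : R -> Prop) (t0 : R) :=
  forall eps, 0 < eps -> exists x, P x /\ x <> t0 /\ Rabs (x - t0) < eps.

Lemma accum_zero f l t0 : derivable_pt_lim f t0 l -> accum (fun x => f x = 0) t0 -> f t0 = 0.
Proof.
move=> hd hacc; apply: NNPP => hne.
have he : 0 < Rabs (f t0) by apply: Rabs_pos_lt.
have [d hd1] := hd 1 Rlt_0_1.
have hl : 0 < Rabs l + 1 by have := Rabs_pos l; lra.
have hm : 0 < Rmin d (Rabs (f t0) / (Rabs l + 1)).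
  apply: Rmin_glb_lt; [exact: cond_pos|exact: Rdiv_lt_0_compat].
have [x [hx0 [hxt hxd]]] := hacc _ hm.
have hh : x - t0 <> 0 by lra.
have := hd1 (x - t0) hh (Rlt_le_trans _ _ _ hxd (Rmin_l _ _)).
have -> : t0 + (x - t0) = x by ring.
rewrite hx0 => h1.
have h2 : Rabs ((0 - f t0) / (x - t0)) < Rabs l + 1.
  have := Rabs_triang_inv ((0 - f t0) / (x - t0)) l; lra.
rewrite /Rdiv Rabs_mult Rabs_inv Rminus_0_l Rabs_Ropp in h2.
have hp : 0 < Rabs (x - t0) by apply: Rabs_pos_lt.
have h3 : Rabs (f t0) < (Rabs l + 1) * Rabs (x - t0).
  have -> : Rabs (f t0) = Rabs (f t0) * / Rabs (x - t0) * Rabs (x - t0) by field; lra.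
  exact: Rmult_lt_compat_r hp h2.
have h4 : Rabs (x - t0) < Rabs (f t0) / (Rabs l + 1) := Rlt_le_trans _ _ _ hxd (Rmin_r _ _).
have : (Rabs l + 1) * Rabs (x - t0) < Rabs (f t0).
  apply: (Rmult_lt_reg_r (/ (Rabs l + 1))); first exact: Rinv_0_lt_compat.
  rewrite Rmult_comm -Rmult_assoc Rinv_l; last lra.
  by move: h4; rewrite /Rdiv; lra.
lra.
Qed.

Lemma accum_deriv f f' t0 : (forall x, derivable_pt_lim f x (f' x)) ->
  accum (fun x => f x = 0) t0 -> accum (fun x => f' x = 0) t0.
Proof.
move=> hd hacc eps he.
have z0 := accum_zero (hd t0) hacc.
have [x [hx0 [hxt hxe]]] := hacc eps he.
case: (Rlt_le_dec x t0) => hlt.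
- have [c [e hc]] := MVT_cor2 f f' x t0 hlt (fun c _ => hd c).
  rewrite z0 hx0 in e.
  exists c; split; last split.
  + have hne : t0 - x <> 0 by lra.
    apply: (Rmult_eq_reg_r (t0 - x)) => //; lra.
  + lra.
  + move: hxe; rewrite !Rabs_left; lra.
- have hlt' : t0 < x by lra.
  have [c [e hc]] := MVT_cor2 f f' t0 x hlt' (fun c _ => hd c).
  rewrite z0 hx0 in e.
  exists c; split; last split.
  + have hne : x - t0 <> 0 by lra.
    apply: (Rmult_eq_reg_r (x - t0)) => //; lra.
  + lra.
  + move: hxe; rewrite !Rabs_right; lra.
Qed.

Lemma rolle_all (h : nat -> R -> R) t0 :
  (forall k x, derivable_pt_lim (h k) x (h k.+1 x)) ->
  accum (fun x => h 0%N x = 0) t0 -> forall k, h k t0 = 0.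
Proof.
move=> hd hacc k.
have : accum (fun x => h k x = 0) t0.
  elim: k => [|k IH] //; exact: accum_deriv (hd k) IH.
exact: accum_zero (hd k t0).
Qed.

Lemma finite_null (E : R -> Prop) (s : list R) : (forall x, E x -> List.In x s) -> lebesgue_null E.
Proof.
move=> Hs eps he.
pose r n := eps / 4 * (/ 2) ^ n.
exists (fun n => List.nth n s 0 - r n), (fun n => List.nth n s 0 + r n).
have hr : forall n, 0 < r n by move=> n; rewrite /r; apply: Rmult_lt_0_compat; [lra|apply: pow_lt; lra].
split; first by move=> n; have := hr n; lra.
split.
  move=> x /Hs /(List.In_nth _ _ 0) [n [_ <-]]; exists n; have := hr n; lra.
move=> N.
have -> : sum_f_R0 (fun n => List.nth n s 0 + r n - (List.nth n s 0 - r n)) N = eps / 2 * sum_f_R0 (fun n => (/ 2) ^ n) N.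
  rewrite scal_sum; apply PartSum.sum_eq; intros n _; rewrite /r; field.
have g := GP_finite (/ 2) N.
have e2 : / 2 - 1 = - (1 / 2) by field.
rewrite e2 Nat.add_1_r in g.
have : sum_f_R0 (fun n => (/ 2) ^ n) N = 2 - 2 * (/ 2) ^ (S N) by lra.
move=> ->; have := pow_lt (/ 2) (S N) ltac:(lra); nra.
Qed.

Lemma exists_new (E : R -> Prop) : positive_measure E -> forall s : list R, exists x, E x /\ ~ List.In x s.
Proof.
move=> hE s; apply: NNPP => hn; apply: hE; apply: (@finite_null _ s) => x hx.
apply: NNPP => hnx; apply: hn; by exists x.
Qed.

Lemma accum_exists (E : R -> Prop) a b : (forall x, E x -> a <= x <= b) -> positive_measure E ->
  exists t0, accum E t0.
Proof.
move=> hab hE.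
pose f (s : list R) : R := proj1_sig (constructive_indefinite_description _ (exists_new hE s)).
have hf : forall s, E (f s) /\ ~ List.In (f s) s.
  by move=> s; rewrite /f; case: constructive_indefinite_description.
pose fix pre n := match n with O => nil | S n => f (pre n) :: pre n end.
pose u n := f (pre n).
have inpre : forall m n, (m < n)%N -> List.In (u m) (pre n).
  move=> m; elim=> [|n IH] //= hmn; rewrite ltnS leq_eqVlt in hmn.
  case/orP: hmn => [/eqP ->|hmn]; [by left|right; exact: IH].
have uinj : forall m n, (m < n)%N -> u m <> u n.
  by move=> m n hmn e; have := proj2 (hf (pre n)); rewrite -/(u n) -e; apply; apply: inpre.
have [l hl] := Bolzano_Weierstrass u (fun c => a <= c <= b) (compact_P3 a b) (fun n => hab _ (proj1 (hf (pre n)))).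
exists l => eps he.
have nb : neighbourhood (fun y => Rabs (y - l) < eps) l.
  by exists (mkposreal eps he) => y; rewrite /disc /=.
have [p1 [_ hp1]] := hl _ 0%N nb.
case: (Req_dec (u p1) l) => e1.
- have [p2 [hp2 hp2']] := hl _ p1.+1 nb.
  exists (u p2); split; [exact: (proj1 (hf (pre p2)))|split => //].
  rewrite -e1 => e2; apply: (uinj p1 p2) => //; by apply/leP.
- exists (u p1); split; [exact: (proj1 (hf (pre p1)))|split => //].
Qed.

End SF.
Import SF.

Module SG.
Local Open Scope R_scope.

Definition Ccv (u : nat -> Cpx) (l : Cpx) :=
  Un_cv (fun m => cre (u m)) (cre l) /\ Un_cv (fun m => cim (u m)) (cim l).

Lemma Un_cv_ext u v l : Un_cv u l -> (forall m, u m = v m) -> Un_cv v l.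
Proof. move=> H E e he; have [N HN] := H e he; exists N => n hn; rewrite -E; exact: HN. Qed.

Lemma Un_cv_const c : Un_cv (fun _ => c) c.
Proof. move=> e he; exists 0%N => n _; rewrite /R_dist Rminus_eq_0 Rabs_R0; lra. Qed.

Lemma Ccv_const c : Ccv (fun _ => c) c.
Proof. split; exact: Un_cv_const. Qed.

Lemma Ccv_add u v a b : Ccv u a -> Ccv v b -> Ccv (fun m => u m + v m)%R (a + b)%R.
Proof. move=> [h1 h2] [h3 h4]; split.
- by apply: Un_cv_ext (CV_plus _ _ _ _ h1 h3) _.
- by apply: Un_cv_ext (CV_plus _ _ _ _ h2 h4) _. Qed.

Lemma Ccv_mul u v a b : Ccv u a -> Ccv v b -> Ccv (fun m => u m * v m)%R (a * b)%R.
Proof. move=> [h1 h2] [h3 h4]; split.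
- by apply: Un_cv_ext (CV_minus _ _ _ _ (CV_mult _ _ _ _ h1 h3) (CV_mult _ _ _ _ h2 h4)) _.
- by apply: Un_cv_ext (CV_plus _ _ _ _ (CV_mult _ _ _ _ h1 h4) (CV_mult _ _ _ _ h2 h3)) _. Qed.

Lemma Ccv_ext u v l : Ccv u l -> (forall m, u m = v m) -> Ccv v l.
Proof. move=> [h1 h2] E; split; [apply: Un_cv_ext h1 _|apply: Un_cv_ext h2 _] => m; by rewrite E. Qed.

Lemma Ccv_sum (I : Type) (r : seq I) (F : I -> nat -> Cpx) (L : I -> Cpx) :
  (forall i, Ccv (F i) (L i)) -> Ccv (fun m => \sum_(i <- r) F i m)%R (\sum_(i <- r) L i)%R.
Proof.
move=> H; elim: r => [|i r IH].
  by apply: Ccv_ext (Ccv_const _) _ => m; rewrite !big_nil.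
rewrite big_cons; apply: Ccv_ext (Ccv_add (H i) IH) _ => m; by rewrite big_cons.
Qed.

Lemma Ccv_prod (I : Type) (r : seq I) (F : I -> nat -> Cpx) (L : I -> Cpx) :
  (forall i, Ccv (F i) (L i)) -> Ccv (fun m => \prod_(i <- r) F i m)%R (\prod_(i <- r) L i)%R.
Proof.
move=> H; elim: r => [|i r IH].
  by apply: Ccv_ext (Ccv_const _) _ => m; rewrite !big_nil.
rewrite big_cons; apply: Ccv_ext (Ccv_mul (H i) IH) _ => m; by rewrite big_cons.
Qed.

Lemma Ccv_det n (A : nat -> 'M[Cpx]_n) (L : 'M[Cpx]_n) :
  (forall i j, Ccv (fun m => A m i j) (L i j)) -> Ccv (fun m => \det (A m))%R (\det L)%R.
Proof.
move=> H; rewrite /determinant.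
apply: Ccv_sum => s; apply: Ccv_mul; first exact: Ccv_const.
by apply: Ccv_prod => i; apply: H.
Qed.

Lemma Ccv_unique u a b : Ccv u a -> Ccv u b -> a = b.
Proof. move=> [h1 h2] [h3 h4]; apply: Cext; [exact: UL_sequence h1 h3|exact: UL_sequence h2 h4]. Qed.

Lemma exp_pow_INR x m : exp x ^ m = exp (INR m * x).
Proof. elim: m => [|m IH]; first by rewrite /= Rmult_0_l exp_0.
rewrite [exp x ^ m.+1]/= IH -exp_plus S_INR; congr exp; ring. Qed.

Lemma Ccv_Cexp0 (z : nat -> Cpx) a : 0 < a -> (forall m, cre (z m) <= - a * INR m) ->
  Ccv (fun m => Cexp (z m)) 0%R.
Proof.
move=> ha hz.
have hx : Rabs (exp (- a)) < 1.
  rewrite Rabs_pos_eq; last exact: Rlt_le (exp_pos _).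
  rewrite -exp_0; apply: exp_increasing; lra.
have key : forall m, Rabs (exp (cre (z m))) <= exp (- a) ^ m.
  move=> m; rewrite Rabs_pos_eq; last exact: Rlt_le (exp_pos _).
  rewrite exp_pow_INR; apply: exp_le_inc'; have := hz m; lra.
have bnd : forall (f : R -> R), (forall x, Rabs (f x) <= 1) ->
  Un_cv (fun m => exp (cre (z m)) * f (cim (z m))) 0.
  move=> f hf e he; have [N HN] := pow_lt_1_zero _ hx e he.
  exists N => n hn; rewrite /R_dist Rminus_0_r Rabs_mult.
  have := HN n hn; have := key n; have := hf (cim (z n)); have := Rabs_pos (f (cim (z n))).
  have := Rabs_pos (exp (cre (z n))); rewrite (Rabs_pos_eq (exp (-a) ^ n)); [nra|].
  apply: pow_le; exact: Rlt_le (exp_pos _).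
split.
- apply: bnd => x; apply: Rabs_le; have := COS_bound x; lra.
- apply: bnd => x; apply: Rabs_le; have := SIN_bound x; lra.
Qed.

End SG.
Import SG.

Module SG2.
Import GRing.Theory.
Local Open Scope ring_scope.

Lemma det_lowblock (d : nat) (f : nat -> nat -> Cpx) (c : Cpx) n : (d <= n)%N ->
  \det (\matrix_(i < n, j < n) (if (i < d)%N then f i j else c *+ (i == j :> nat)))
  = c ^+ (n - d) * \det (\matrix_(i < d, j < d) f i j).
Proof.
elim: n => [|n IH] hd.
  have -> : d = 0%N by apply/eqP; rewrite -leqn0.
  by rewrite !det_mx00 expr0 mul1r.
case: (ltngtP d n.+1) => hdn; last first.
- subst d; rewrite subnn expr0 mul1r; congr (\det _); apply/matrixP => i j; by rewrite !mxE ltn_ord.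
- by move: hd; rewrite leqNgt hdn.
have hdn' : (d <= n)%N by rewrite -ltnS.
rewrite (expand_det_row _ ord_max) (bigD1 ord_max) //= big1; last first.
  move=> j hj; rewrite !mxE /= ltnNge hdn' /=.
  have -> : (n == j :> nat) = false.
    apply/negbTE; apply: contra hj => /eqP e; apply/eqP; apply: val_inj => /=; by rewrite -e.
  by rewrite mulr0n mul0r.
rewrite addr0 !mxE /= ltnNge hdn' /= eqxx mulr1n /cofactor /=.
have -> : (-1) ^+ (n + n) = 1 :> Cpx by rewrite -signr_odd addnn odd_double expr0.
rewrite mul1r subSn // exprS -mulrA -(IH hdn'); congr (_ * \det _).
apply/matrixP => i j; rewrite !mxE !lift_max //.
Qed.

End SG2.
Import SG2.

Module SG3.
Local Open Scope R_scope.

Lemma cexpi_add a b : (cexpi a * cexpi b)%R = cexpi (a + b).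
Proof. rewrite !cexpi_Cexp -Cexp_add; congr Cexp; apply: Cext => /=; ring. Qed.
Lemma cexpi0 : cexpi 0 = 1%R.
Proof. by rewrite cexpi_Cexp -Cexp0. Qed.
Lemma cexpi_neq0 a : cexpi a <> 0%R.
Proof. rewrite cexpi_Cexp; exact: Cexp_neq0. Qed.
Lemma cexpi_nat x k : cexpi (INR k * x) = (cexpi x ^+ k)%R.
Proof.
elim: k => [|k IH]; first by rewrite /= Rmult_0_l cexpi0 GRing.expr0.
rewrite GRing.exprS -IH cexpi_add S_INR; congr cexpi; ring.
Qed.
Lemma cexpi_2PIn k : cexpi (2 * PI * INR k) = 1%R.
Proof.
apply: Cext => /=.
- have := cos_period 0 k; rewrite cos_0 Rplus_0_l => <-; congr cos; ring.
- have := sin_period 0 k; rewrite sin_0 Rplus_0_l => <-; congr sin; ring.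
Qed.

Lemma cexpi_neq1 x : 0 < x < 2 * PI -> cexpi x <> 1%R.
Proof.
move=> hx e.
have hs : sin x = 0 by have := f_equal cim e.
have hc : cos x = 1 by have := f_equal cre e.
have [k hk] := sin_eq_0_0 x hs.
have hpi := PI_RGT_0.
have h1 : 0 < IZR k by apply: (Rmult_lt_reg_r PI) => //; lra.
have h2 : IZR k < 2 by apply: (Rmult_lt_reg_r PI) => //; lra.
have : k = Zpos xH by apply lt_IZR in h1; apply lt_IZR in h2; lia.
move=> ek; rewrite hk ek Rmult_1_l cos_PI in hc; lra.
Qed.

Lemma natr_cre n : cre (n%:R : Cpx)%R = INR n.
Proof.
elim: n => [|n IH]; first by [].
by rewrite GRing.mulrS creD IH S_INR /=; ring.
Qed.
Lemma natr_neq0 n : (0 < n)%N -> (n%:R : Cpx)%R <> 0%R.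
Proof. move=> hn e; have := natr_cre n; rewrite e /= => h.
have : 0 < INR n by apply: lt_0_INR; apply/ltP. lra. Qed.

Lemma geom_zero (Q z : nat) : (0 < z)%N -> (z < Q)%N ->
  (\sum_(k < Q) cexpi (2 * PI * INR z / INR Q) ^+ k)%R = 0%R.
Proof.
move=> hz hzQ.
have hQ : 0 < INR Q by apply: lt_0_INR; apply/ltP; apply: leq_ltn_trans hzQ.
have hz' : 0 < INR z by apply: lt_0_INR; apply/ltP.
have hzQ' : INR z < INR Q by apply: lt_INR; apply/ltP.
set zeta := cexpi _.
have hpow : (zeta ^+ Q)%R = 1%R.
  rewrite /zeta -cexpi_nat -(cexpi_2PIn z); congr cexpi; field; lra.
have hne : (zeta - 1)%R != 0%R.
  rewrite GRing.subr_eq0; apply/eqP; apply: cexpi_neq1; split.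
  + apply: Rdiv_lt_0_compat => //; have := PI_RGT_0; nra.
  + apply: (Rmult_lt_reg_r (INR Q)) => //; rewrite /Rdiv Rmult_assoc Rinv_l; last lra.
    have := PI_RGT_0; nra.
have := GRing.subrX1 zeta Q; rewrite hpow GRing.subrr => /esym/eqP.
by rewrite GRing.mulf_eq0 (negbTE hne) /= => /eqP.
Qed.

Lemma orth (Q s t : nat) : (s < Q)%N -> (t < Q)%N ->
  (\sum_(k < Q) cexpi (2 * PI * INR k * (INR t - INR s) / INR Q))%R
  = (if s == t then Q%:R else 0)%R.
Proof.
move=> hs ht.
have hQ : 0 < INR Q by apply: lt_0_INR; apply/ltP; apply: leq_ltn_trans ht.
case: eqP => [<-|hst] /=.
  under eq_bigr => k _ do rewrite Rminus_eq_0 Rmult_0_r /Rdiv Rmult_0_l cexpi0.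
  by rewrite GRing.sumr_const card_ord.
case: (ltngtP s t) => hlt; last by [].
- rewrite -[in RHS](@geom_zero Q (t - s)%N) ?subn_gt0 //; last by apply: leq_ltn_trans (leq_subr _ _) ht.
  apply: eq_bigr => k _; rewrite -cexpi_nat; congr cexpi.
  rewrite (minus_INR t s); last by apply/leP; apply: ltnW.
  field; lra.
- rewrite -[in RHS](@geom_zero Q (t + Q - s)%N); first last.
  + by rewrite ltn_subLR ?ltn_add2r // (leq_trans (ltnW hs)) // leq_addl.
  + by rewrite subn_gt0 (leq_trans hs) // leq_addl.
  apply: eq_bigr => k _; rewrite -cexpi_nat.
  rewrite -[cexpi (2 * PI * INR k * _ / _)]GRing.mulr1 -(cexpi_2PIn k) cexpi_add; congr cexpi.
  rewrite (minus_INR (t + Q) s); last by apply/leP; rewrite (leq_trans (ltnW hs)) // leq_addl.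
  rewrite plus_INR; field; lra.
Qed.

End SG3.
Import SG3.

Module SG4.
Import GRing.Theory.
Local Open Scope R_scope.

Section DetG.
Variables (Q : nat) (p : Z) (q : nat) (b : R).
Hypothesis hQ : (0 < Q)%N.

Definition Fm : 'M[Cpx]_Q := (\matrix_(s < Q, k < Q) cexpi (- (2 * PI * INR s * INR k / INR Q)))%R.
Definition Fs : 'M[Cpx]_Q :=
  (\matrix_(j < Q, s < Q) ((Q%:R)^-1 * cexpi (2 * PI * INR s * INR j / INR Q)))%R.
Definition arow : 'rV[Cpx]_Q := (\row_(s < Q) a_idx p q b s)%R.

Lemma INRQ_pos : 0 < INR Q.
Proof. by apply: lt_0_INR; apply/ltP. Qed.

Lemma Gmx_fact : Gmx Q p q b = (Fs *m diag_mx arow *m Fm)%R.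
Proof.
apply/matrixP => j k; rewrite mul_mx_diag !mxE /Gent mulr_sumr; apply: eq_bigr => s _.
rewrite !mxE /= -!mulrA; congr (_ * _)%R.
rewrite [(a_idx _ _ _ _ * _)%R]mulrC mulrA cexpi_add; congr (cexpi _ * _)%R.
have := INRQ_pos; move=> h; field; lra.
Qed.

Lemma FmFs : (Fm *m Fs)%R = 1%:M%R.
Proof.
apply/matrixP => s t; rewrite !mxE.
under eq_bigr => k _ do rewrite !mxE mulrCA cexpi_add.
rewrite -mulr_sumr.
have -> : (\sum_(k < Q) cexpi (- (2 * PI * INR s * INR k / INR Q) + 2 * PI * INR t * INR k / INR Q))%R
   = (\sum_(k < Q) cexpi (2 * PI * INR k * (INR t - INR s) / INR Q))%R.
  apply: eq_bigr => k _; congr cexpi; have := INRQ_pos; move=> h; field; lra.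
rewrite orth //.
have -> : (nat_of_ord s == nat_of_ord t) = (s == t) by [].
case: eqP => [_|_]; last by rewrite mulr0.
rewrite mulVf //; apply/eqP; exact: natr_neq0.
Qed.

Lemma detG_neq0 : (\det (Gmx Q p q b))%R <> 0%R.
Proof.
have h1 : (\det Fm * \det Fs = 1)%R by rewrite -det_mulmx FmFs det1.
rewrite Gmx_fact !det_mulmx det_diag => e.
have : (\det Fs * \prod_i arow 0 i)%R = 0%R.
  move: e => /eqP; rewrite mulf_eq0 => /orP [/eqP -> //|/eqP e2].
  by move: h1; rewrite e2 mul0r => /esym/eqP; rewrite oner_eq0.
move/eqP; rewrite mulf_eq0 => /orP [/eqP e3|].
  by move: h1; rewrite e3 mulr0 => /esym/eqP; rewrite oner_eq0.
apply/negP; apply/prodf_neq0 => i _; rewrite mxE; apply/eqP; exact: cexpi_neq0.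
Qed.
End DetG.

End SG4.
Import SG4.

Module SH.
Import GRing.Theory.
Local Open Scope R_scope.

Lemma Cexp_imag x : Cexp (MkC 0 x) = MkC (cos x) (sin x).
Proof. apply: Cext; rewrite /= exp_0; ring. Qed.

Section Main.
Variables (Q : nat) (p : Z) (q : nat) (b mu : R) (lam : Cpx).

Definition phi (j : nat) := 2 * PI * INR j / INR Q.
Definition gam (j : nat) := (- (Ci * RC (mu / 2)) * Cexp (MkC 0 (phi j)))%R.
Definition del (j : nat) := (- (Ci * RC (mu / 2)) * Cexp (MkC 0 (- phi j)))%R.
Definition uu (j : nat) (w : Cpx) := (gam j * Cexp (Ci * w) + del j * Cexp (- (Ci * w)))%R.
Definition Mw (w : Cpx) : 'M[Cpx]_Q :=
  (\matrix_(j < Q, k < Q) (Cexp (uu j w) * Gent Q p q b j k - lam *+ (j == k)))%R.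
Definition Phi (w : Cpx) : Cpx := (\det (Mw w))%R.

Lemma uu_real j t : Cexp (uu j (RC t)) = cexpi (- (mu * cos (t + 2 * PI * INR j / INR Q))).
Proof.
rewrite cexpi_Cexp; congr Cexp; rewrite /uu.
have -> : (Ci * RC t)%R = MkC 0 t by apply: Cext => /=; ring.
have -> : (- MkC 0 t)%R = MkC 0 (- t) by apply: Cext => /=; ring.
rewrite !Cexp_imag /gam /del !Cexp_imag /phi cos_neg sin_neg.
set f := 2 * PI * INR j / INR Q.
apply: Cext; rewrite ?(creD, cimD, creN, cimN, creM, cimM, creRC, cimRC) /=;
  rewrite ?cos_plus ?cos_neg ?sin_neg; field.
Qed.

Lemma Mw_real t : Mw (RC t) = (Smx Q p q b t mu - lam%:M)%R.
Proof. apply/matrixP => j k; by rewrite !mxE uu_real. Qed.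

Lemma good_ext f g : good f -> (forall w, f w = g w) -> good g.
Proof. move=> [l hl] E; exists l => w; by rewrite -E hl. Qed.

Lemma Phi_good : good Phi.
Proof.
apply: (@good_ext (fun w => \sum_(s : 'S_Q) (-1) ^+ s * \prod_i Mw w i (s i))%R); last by [].
apply: good_sum => s; apply: good_mul; first exact: good_const.
apply: good_prod => i.
apply: (@good_ext (fun w => Cexp (uu i w) * Gent Q p q b i (s i) + (- (lam *+ (i == s i))))%R);
  last by move=> w; rewrite mxE.
apply: good_add; last exact: good_const.
apply: good_mul; last exact: good_const.
exact: good_exp.
Qed.
End Main.

End SH.
Import SH.

Module SH2.
Import GRing.Theory.
Local Open Scope R_scope.

Lemma path_real x : (0 + RC x * 1)%R = RC x.
Proof. by rewrite add0r mulr1. Qed.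

Lemma Phi_zero Q p q b mu lam (E : R -> Prop) a c :
  (forall x, E x -> a <= x <= c) -> positive_measure E ->
  (forall x, E x -> Phi Q p q b mu lam (RC x) = 0%R) -> forall w, Phi Q p q b mu lam w = 0%R.
Proof.
move=> hab hE hz.
have [l hl] := Phi_good Q p q b mu lam.
have [t0 ht0] := accum_exists hab hE.
have hall : forall k, eval (Dn k l) (0 + RC t0 * 1)%R = 0%R.
  move=> k; apply: Cext_prj => bb.
  pose h k s := prj bb (eval (Dn k l) (0 + RC s * 1)%R).
  have hd : forall k x, derivable_pt_lim (h k) x (h k.+1 x).
    move=> k' x; rewrite /h; apply: prj_deriv.
    apply: Cderiv_ext (eval_deriv (Dn k' l) 0%R 1%R x) _ _ => //.
    by rewrite mul1r.
  apply: (rolle_all hd) => eps he.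
  have [x [hx [hxt hxe]]] := ht0 eps he.
  exists x; split; last by split.
  by rewrite /h /= path_real -hl hz // prj0.
move=> w; rewrite hl; exact: identity hall w.
Qed.

End SH2.
Import SH2.

Module SH3.
Import GRing.Theory.
Local Open Scope R_scope.

Section Asym.
Variables (Q : nat) (p : Z) (q : nat) (b mu : R) (lam : Cpx).
Hypothesis hQ : (0 < Q)%N.
Hypothesis hmu : 0 < mu.

Definition th0 := PI / (2 * INR Q).
Definition wn (m : nat) := MkC th0 (- INR m).
Definition sg (j : nat) := sin (th0 + phi Q j).

Lemma INRQ_pos' : 0 < INR Q.
Proof. by apply: lt_0_INR; apply/ltP. Qed.

Lemma cre_uu j m : cre (uu Q mu j (wn m)) = mu / 2 * (exp (INR m) - exp (- INR m)) * sg j.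
Proof.
rewrite /uu /sg.
have -> : (Ci * wn m)%R = MkC (INR m) th0 by apply: Cext => /=; ring.
have -> : (- MkC (INR m) th0)%R = MkC (- INR m) (- th0) by apply: Cext => /=; ring.
rewrite /gam /del !Cexp_imag sin_plus.
set f := phi Q j.
rewrite ?(creD, cimD, creN, cimN, creM, cimM, creRC, cimRC) /= cos_neg sin_neg; rewrite ?cos_neg ?sin_neg; field.
Qed.

Lemma exp_diff m : INR m <= exp (INR m) - exp (- INR m).
Proof.
have h1 : exp (- INR m) <= 1.
  rewrite -exp_0; apply: exp_le_inc'; have := pos_INR m; lra.
case: (Req_dec (INR m) 0) => [->|hm]; first by rewrite Ropp_0 exp_0; lra.
have := exp_ineq1 _ hm; lra.
Qed.

Lemma th0_phi j : th0 + phi Q j = PI * (4 * INR j + 1) / (2 * INR Q).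
Proof. rewrite /th0 /phi; have := INRQ_pos'; move=> h; field; lra. Qed.

Lemma sg_pos j : (j < (Q.+1)./2)%N -> 0 < sg j.
Proof.
rewrite gtn_half_double ltnS -addnn => hj.
have hj' : 2 * INR j + 1 <= INR Q.
  have := le_INR _ _ (elimT leP hj); rewrite S_INR plus_INR; lra.
have hpi := PI_RGT_0; have hq := INRQ_pos'; have := pos_INR j => h0.
rewrite /sg th0_phi; apply: sin_gt_0.
- apply: Rdiv_lt_0_compat; nra.
- apply: (Rmult_lt_reg_r (2 * INR Q)); first lra.
  rewrite /Rdiv Rmult_assoc Rinv_l; last lra. nra.
Qed.

Lemma sg_neg j : ((Q.+1)./2 <= j)%N -> (j < Q)%N -> sg j < 0.
Proof.
rewrite leq_half_double ltnS -addnn => hj hjQ.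
have hj' : INR Q <= 2 * INR j.
  have := le_INR _ _ (elimT leP hj); rewrite plus_INR; lra.
have hjQ' : INR j + 1 <= INR Q.
  have := le_INR _ _ (elimT leP hjQ); rewrite S_INR; lra.
have hpi := PI_RGT_0; have hq := INRQ_pos'; have := pos_INR j => h0.
rewrite /sg th0_phi; apply: sin_lt_0.
- apply: (Rmult_lt_reg_r (2 * INR Q)); first lra.
  rewrite /Rdiv Rmult_assoc Rinv_l; last lra. nra.
- apply: (Rmult_lt_reg_r (2 * INR Q)); first lra.
  rewrite /Rdiv Rmult_assoc Rinv_l; last lra. nra.
Qed.
End Asym.

End SH3.
Import SH3.

Module SH4.
Import GRing.Theory.
Local Open Scope R_scope.

Section Asym2.
Variables (Q : nat) (p : Z) (q : nat) (b mu : R) (lam : Cpx).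
Hypothesis hQ : (0 < Q)%N.
Hypothesis hmu : 0 < mu.
Let d := (Q.+1)./2.

Definition Am (m : nat) : 'M[Cpx]_Q :=
  (\matrix_(i < Q, j < Q)
     (if (i < d)%N then Gent Q p q b i j + (- (lam *+ (i == j))) * Cexp (- uu Q mu i (wn Q m))
      else Cexp (uu Q mu i (wn Q m)) * Gent Q p q b i j + (- (lam *+ (i == j)))))%R.
Definition rv (m : nat) : 'rV[Cpx]_Q :=
  (\row_(i < Q) (if (i < d)%N then Cexp (uu Q mu i (wn Q m)) else 1))%R.

Lemma Mw_factor m : Mw Q p q b mu lam (wn Q m) = (diag_mx (rv m) *m Am m)%R.
Proof.
apply/matrixP => i j; rewrite mul_diag_mx !mxE.
case: ifP => _; last by rewrite mul1r.
set E := Cexp (uu Q mu i (wn Q m)); set E' := Cexp (- uu Q mu i (wn Q m))%R.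
have hE : (E * E')%R = 1%R by rewrite /E /E' mulrC CexpNK.
by rewrite mulrDr; congr (_ + _)%R; rewrite mulrCA hE mulr1.
Qed.

Lemma detAm_zero m : (forall w, Phi Q p q b mu lam w = 0%R) -> (\det (Am m))%R = 0%R.
Proof.
move=> hz; have := hz (wn Q m); rewrite /Phi Mw_factor det_mulmx det_diag => /eqP.
rewrite mulf_eq0 => /orP [|/eqP //].
move/eqP => e; exfalso; move: e; apply/eqP; apply/prodf_neq0 => i _; rewrite mxE.
by case: ifP => _; [apply/eqP; exact: Cexp_neq0|exact: oner_neq0].
Qed.

Let L : 'M[Cpx]_Q :=
  (\matrix_(i < Q, j < Q) (if (i < d)%N then Gent Q p q b i j else (- lam) *+ (i == j :> nat)))%R.

Lemma Am_cv i j : Ccv (fun m => Am m i j) (L i j).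
Proof.
rewrite /L mxE.
case: (ltnP i d) => hi.
- have hs := sg_pos hQ hi.
  have ha : 0 < mu * sg Q i / 2 by apply: Rdiv_lt_0_compat; [nra|lra].
  have hc := @Ccv_Cexp0 (fun m => - uu Q mu i (wn Q m))%R (mu * sg Q i / 2) ha
    (fun m => ltac:(rewrite creN cre_uu; have := exp_diff m; nra)).
  have H := Ccv_add (Ccv_const (Gent Q p q b i j)) (Ccv_mul (Ccv_const (- (lam *+ (i == j)))%R) hc).
  rewrite mulr0 addr0 in H.
  by apply: Ccv_ext H _ => m; rewrite /Am mxE hi.
- have hs := sg_neg hQ hi (ltn_ord i).
  have ha : 0 < mu * (- sg Q i) / 2 by apply: Rdiv_lt_0_compat; [nra|lra].
  have hc := @Ccv_Cexp0 (fun m => uu Q mu i (wn Q m))%R (mu * (- sg Q i) / 2) ha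
    (fun m => ltac:(rewrite cre_uu; have := exp_diff m; nra)).
  have H := Ccv_add (Ccv_mul hc (Ccv_const (Gent Q p q b i j))) (Ccv_const (- (lam *+ (i == j)))%R).
  rewrite mul0r add0r in H.
  apply: Ccv_ext; last first.
    by move=> m; rewrite /Am mxE ltnNge hi.
  by rewrite mulNrn.
Qed.

End Asym2.

End SH4.
Import SH4.

Module SH5.
Import GRing.Theory.
Local Open Scope R_scope.

Lemma detGd_zero Q p q b mu lam : (0 < Q)%N -> 0 < mu ->
  (forall w, Phi Q p q b mu lam w = 0%R) -> lam <> 0%R ->
  (\det (Gd (Q.+1)./2 Q p q b))%R = 0%R.
Proof.
move=> hQ hmu hz hlam.
have hdQ : ((Q.+1)./2 <= Q)%N by rewrite leq_half_double ltnS -addnn leq_addr.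
have hL := Ccv_unique (Ccv_det (Am_cv p q b lam hQ hmu))
   (Ccv_ext (Ccv_const 0%R) (fun m => esym (detAm_zero m hz))).
rewrite (det_lowblock (Gent Q p q b) (- lam)%R hdQ) in hL.
move/eqP: hL; rewrite mulf_eq0 => /orP [|/eqP //].
by rewrite expf_eq0 oppr_eq0 => /andP [_ /eqP].
Qed.

Lemma Phi0_neq0 Q p q b mu : (0 < Q)%N -> Phi Q p q b mu 0%R 0%R <> 0%R.
Proof.
move=> hQ.
have -> : Phi Q p q b mu 0%R 0%R =
   (\det (diag_mx (\row_(i < Q) Cexp (uu Q mu i 0%R)) *m Gmx Q p q b))%R.
  rewrite /Phi; congr (\det _)%R; apply/matrixP => i j.
  by rewrite mul_diag_mx !mxE mul0rn subr0.
rewrite det_mulmx det_diag => /eqP; rewrite mulf_eq0 => /orP [|/eqP]; last exact: detG_neq0.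
apply/negP; apply/prodf_neq0 => i _; rewrite mxE; apply/eqP; exact: Cexp_neq0.
Qed.

Lemma eig_det n (g : 'M[Cpx]_n) a : eigenvalue g a -> (\det (g - a%:M))%R = 0%R.
Proof.
move/eigenvalueP => [v hv hv0]; apply/eqP/det0P; exists v => //.
by rewrite mulmxBr hv mul_mx_scalar subrr.
Qed.

End SH5.
Import SH5.


Local Open Scope R_scope.

Theorem lemma1 (P nu : Z) (Q : nat) (p : Z) (q : nat) (mu : R) (E : R -> Prop) :
  (1 <= Q)%N ->
  P <> Z0 ->
  (0 < q)%N ->
  Z.mul P (Z.of_nat q) = Z.mul p (Z.of_nat Q) ->
  Z.gcd p (Z.of_nat q) = Zpos xH ->
  0 < mu ->
  (forall theta, E theta -> 0 < theta < 2 * PI / INR Q) ->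
  positive_measure E ->
  (exists lam : Cpx, forall theta, E theta ->
      eigenvalue (Smx Q p q (beta P nu Q) theta mu) lam) ->
  (\det (Gd (Q.+1)./2 Q p q (beta P nu Q)) = 0)%R.
Proof.
move=> hQ _ _ _ _ hmu hE hpos [lam hlam].
have hz : forall x, E x -> Phi Q p q (beta P nu Q) mu lam (RC x) = 0%R.
  by move=> x hx; rewrite /Phi Mw_real; apply: eig_det; apply: hlam.
have hab : forall x, E x -> 0 <= x <= 2 * PI / INR Q.
  by move=> x /hE [h1 h2]; split; apply: Rlt_le.
have hall := Phi_zero hab hpos hz.
apply: (detGd_zero hQ hmu hall).
move=> e; subst lam.
exact: (Phi0_neq0 (p := p) (q := q) (b := beta P nu Q) (mu := mu) hQ (hall 0%R)).
Qed.
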